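(* Let $D$ be an integral domain with quotient field $K$, $n\ge1$, and $C\in M_n(D)$. Then $$\{f(C)\mid f\in \mathrm{Int}_K(M_n(D))\}=D[C],$$ where $D[C]=\{f(C)\mid f\in D[x]\}$.
   Context: $M_n(D)$ is the ring of $n\times n$ matrices over $D$; $\mathrm{Int}_K(M_n(D))=\{f\in K[x]\mid f(C)\in M_n(D)\text{ for all }C\in M_n(D)\}$, with $f(C)$ computed in $M_n(K)$. *)

(* Defs.v *)
From HB Require Import structures.
From mathcomp Require Import all_boot all_order all_algebra.
Set Implicit Arguments. Unset Strict Implicit. Unset Printing Implicit Defensive.
Import GRing.Theory.
Local Open Scope ring_scope.

Definition toK (D : idomainType) : D -> {fraction D} := @FracField.tofrac D.

Definition mxK (D : idomainType) (m : nat) (C : 'M[D]_m) : 'M[{fraction D}]_m :=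
  map_mx (@toK D) C.

(* Int_K(M_m(D)) for m = n.+1 >= 1: polynomials f in K[x] with
   f(C) in M_m(D) for all C in M_m(D), f(C) computed in M_m(K). *)
Definition IntK (D : idomainType) (n : nat) (f : {poly {fraction D}}) : Prop :=
  forall C : 'M[D]_n.+1, exists C' : 'M[D]_n.+1,
    horner_mx (mxK C) f = mxK C'.

(* Main.v *)
Require Import Defs.
From HB Require Import structures.
From mathcomp Require Import all_boot all_order all_algebra.
Import GRing.Theory.
Local Open Scope ring_scope.

Definition comp {R : nzRingType} n (p : {poly R}) : 'M[R]_n.+1 :=
  \matrix_(i, j) if i == n :> nat then - p`_j else (i.+1 == j :> nat)%:R.

Lemma comp_pow (R : comNzRingType) n (p : {poly R}) i (k : 'I_n.+1) :
  (i <= n)%N -> ((comp n p) ^+ i) ord0 k = (i == k :> nat)%:R.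
Proof.
elim: i k => [|i IH] k hi.
  by rewrite expr0 mxE.
rewrite exprSr mxE (bigD1 (inord i)) //= big1 ?addr0.
  rewrite IH; last by rewrite ltnW.
  rewrite inordK ?eqxx ?mul1r; last by rewrite ltnS ltnW.
  rewrite mxE inordK; last by rewrite ltnS ltnW.
  by rewrite (ltn_eqF hi).
move=> j hj; rewrite IH ?(ltnW hi) //.
case: eqP => e; last by rewrite mul0r.
by exfalso; move/eqP: hj; apply; apply/val_inj; rewrite /= inordK ?e // ltnS ltnW.
Qed.

Lemma comp_horner (R : comNzRingType) n (p r : {poly R}) (k : 'I_n.+1) :
  (size r <= n.+1)%N -> (horner_mx (comp n p) r) ord0 k = r`_k.
Proof.
move=> hs.
rewrite -[in LHS](coefK r) poly_def linear_sum /= summxE.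
rewrite (eq_bigr (fun i : 'I_(size r) => r`_i * (i == k :> nat)%:R)); last first.
  move=> i _; rewrite linearZ /= rmorphXn /= horner_mx_X mxE comp_pow //.
  by rewrite -ltnS (leq_trans (ltn_ord i)).
have [hk|hk] := ltnP k (size r).
  rewrite (bigD1 (Ordinal hk)) //= eqxx mulr1 big1 ?addr0 // => i hi.
  case: eqP => e; last by rewrite mulr0.
  by exfalso; move/eqP: hi; apply; apply/val_inj; rewrite /= e.
rewrite nth_default // big1 // => i _.
by rewrite (ltn_eqF (leq_trans (ltn_ord i) hk)) mulr0.
Qed.

Lemma char_poly_cast (R : comNzRingType) m m' (e : m = m') (A : 'M[R]_m) :
  char_poly (castmx (e, e) A) = char_poly A.
Proof. by subst m'; rewrite castmx_id. Qed.

Lemma comp_root (R : comNzRingType) n (p : {poly R}) :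
  p \is monic -> size p = n.+2 -> horner_mx (comp n p) p = 0.
Proof.
move=> pm ps.
have e : (size p).-1 = n.+1 by rewrite ps.
have -> : comp n p = castmx (e, e) (companionmx p).
  apply/matrixP => i j; rewrite castmxE !mxE /=.
  by rewrite ps.
have := Cayley_Hamilton (castmx (e, e) (companionmx p)).
by rewrite char_poly_cast companionmxK.
Qed.

Lemma mxK_horner (D : idomainType) n (A : 'M[D]_n.+1) (g : {poly D}) :
  mxK (horner_mx A g) = horner_mx (mxK A) (map_poly (@toK D) g).
Proof. by rewrite /mxK /toK map_horner_mx. Qed.

Lemma mxK0 (D : idomainType) n : mxK (0 : 'M[D]_n.+1) = 0.
Proof. by rewrite /mxK /toK map_mx0. Qed.

Theorem mainTheorem3 (D : idomainType) (n : nat) (C : 'M[D]_n.+1)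
    (M : 'M[{fraction D}]_n.+1) :
  (exists f : {poly {fraction D}}, IntK n f /\ horner_mx (mxK C) f = M) <->
  (exists g : {poly D}, M = mxK (horner_mx C g)).
Proof.
split; last first.
  case=> g ->; exists (map_poly (@toK D) g); split; last by rewrite mxK_horner.
  by move=> A; exists (horner_mx A g); rewrite mxK_horner.
case=> f [hf <-].
set p := char_poly C.
set pK := map_poly (@toK D) p.
have pm : p \is monic by apply: char_poly_monic.
have pKm : pK \is monic by rewrite /pK /toK; apply: monic_map.
have ps : size p = n.+2 by rewrite size_char_poly.
have pKs : size pK = n.+2.
  by rewrite /pK /toK size_map_poly_id0 // (monicP pm) rmorph1 oner_neq0.
have pK0 : pK != 0 by rewrite -size_poly_eq0 pKs.
set r := f %% pK.
have hr A : horner_mx A pK = 0 -> horner_mx A f = horner_mx A r.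
  by move=> hA; rewrite {1}(divp_eq f pK) rmorphD rmorphM /= hA mulr0 add0r.
have rs : (size r <= n.+1)%N by rewrite -ltnS -pKs ltn_modpN0.
have hC : horner_mx (mxK C) pK = 0.
  by rewrite -mxK_horner Cayley_Hamilton mxK0.
have hcomp : mxK (comp n p) = comp n pK.
  apply/matrixP => i j; rewrite !mxE /pK coef_map /toK.
  by case: ifP => _; rewrite ?rmorphN ?rmorph_nat.
have hcomp0 : horner_mx (comp n pK) pK = 0 by apply: comp_root.
have [C' hC'] := hf (comp n p).
exists (\poly_(k < n.+1) C' ord0 (inord k)).
rewrite mxK_horner hr // ; congr horner_mx.
apply/polyP => k; rewrite coef_map coef_poly.
case: ltnP => hk.
  have -> : inord k = Ordinal hk :> 'I_n.+1 by apply: val_inj; rewrite /= inordK.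
  transitivity ((mxK C') ord0 (Ordinal hk)); last by rewrite /mxK mxE.
  by rewrite -hC' hcomp hr // comp_horner.
by rewrite nth_default ?(leq_trans rs hk) // raddf0.
Qed.
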